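(* Let $p\ge1$, $m\in\mathbb{N}$, $a,b>0$, $\beta\in\mathbb{R}^p$, let $A$ be a real $p\times s$ matrix with $\operatorname{rank}(A)=s\le p$, and let $\xi$ be a design on $\mathcal{X}$. Then $A^T\beta$ is identifiable for $\xi$ in the Poisson–Gamma model (i.e. $A=M(\xi;\beta)H$ for some $H\in\mathbb{R}^{p\times s}$) if and only if $A^T\beta$ is identifiable for $\xi$ in the Poisson model (i.e. $A=M_{Po}(\xi;\beta)H'$ for some $H'\in\mathbb{R}^{p\times s}$).
   Context: Let $\mathcal{X}\subseteq\mathbb{R}^k$ be a design region and $f=(1,f_1,\ldots,f_{p-1})^T:\mathcal{X}\to\mathbb{R}^p$ a vector of regression functions whose first component is the constant 1. A design $\xi$ is a probability measure on $\mathcal{X}$ with finite support $x_1,\ldots,x_l$ and weights $w_1,\ldots,w_l\ge0$, $\sum_j w_j=1$. The Poisson information matrix is $M_{Po}(\xi;\beta)=\sum_{j=1}^l w_j\exp(f(x_j)^T\beta)f(x_j)f(x_j)^T$, and the Poisson–Gamma information matrix is $M(\xi;\beta)=\frac{a}{b}\Bigl(M_{Po}(\xi;\beta)-\frac{M_{Po}(\xi;\beta)e_1e_1^TM_{Po}(\xi;\beta)}{e_1^TM_{Po}(\xi;\beta)e_1+b/m}\Bigr)$, where $e_1$ is the first standard unit vector of $\mathbb{R}^p$. *)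

(* Defs.v *)
From HB Require Import structures.
From mathcomp Require Import all_boot all_order all_algebra.
From mathcomp Require Import all_classical all_reals all_analysis.
Set Implicit Arguments. Unset Strict Implicit. Unset Printing Implicit Defensive.
Import Order.TTheory GRing.Theory Num.Theory.
Local Open Scope ring_scope.

Definition e1 (R : realType) (p : nat) : 'cV[R]_p :=
  \col_(i < p) (if val i == 0%N then 1 else 0).

Definition M_Po (R : realType) (k p l : nat) (f : 'rV[R]_k -> 'cV[R]_p)
  (xs : 'I_l -> 'rV[R]_k) (w : 'I_l -> R) (beta : 'cV[R]_p) : 'M[R]_p :=
  \sum_(j < l) (w j * expR (((f (xs j))^T *m beta) 0 0)) *:
                 (f (xs j) *m (f (xs j))^T).

Definition M_PG (R : realType) (k p l : nat) (a b : R) (m : nat)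
  (f : 'rV[R]_k -> 'cV[R]_p)
  (xs : 'I_l -> 'rV[R]_k) (w : 'I_l -> R) (beta : 'cV[R]_p) : 'M[R]_p :=
  let MP := M_Po f xs w beta in
  (a / b) *: (MP - (((e1 R p)^T *m MP *m e1 R p) 0 0 + b / m%:R)^-1 *:
                   (MP *m e1 R p *m (e1 R p)^T *m MP)).

Definition identifiable (R : realType) (p s : nat) (M : 'M[R]_p)
  (A : 'M[R]_(p, s)) : Prop :=
  exists H : 'M[R]_(p, s), A = M *m H.

(* Main.v *)
Require Import Defs.
From HB Require Import structures.
From mathcomp Require Import all_boot all_order all_algebra.
From mathcomp Require Import all_classical all_reals all_analysis.
From mathcomp Require Import ring.
Import Order.TTheory GRing.Theory Num.Theory.
Local Open Scope ring_scope.
Local Open Scope classical_set_scope.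

Lemma key (F : fieldType) p (P : 'M[F]_p) (E : 'cV[F]_p) (bm : F) :
  (E^T *m P *m E) 0 0 + bm != 0 -> bm != 0 ->
  (1%:M - ((E^T *m P *m E) 0 0 + bm)^-1 *: (E *m E^T *m P)) *m
  (1%:M + bm^-1 *: (E *m E^T *m P)) = 1%:M.
Proof.
set d := (E^T *m P *m E) 0 0; set X := E *m E^T *m P => hc hb.
have hX : X *m X = d *: X.
  have -> : X *m X = E *m (E^T *m P *m E) *m E^T *m P by rewrite /X !mulmxA.
  rewrite [E^T *m P *m E]mx11_scalar -/d mul_mx_scalar -!scalemxAl.
  by rewrite /X.
rewrite mulmxBl !mulmxDr !mulmx1 mul1mx -!scalemxAl -!scalemxAr hX.
apply/matrixP => i j; rewrite !mxE.
set x := X i j; set o := (1%:M : 'M[F]_p) i j.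
field; by rewrite hc hb.
Qed.

Lemma d_ge0 (R : realType) (k p l : nat) (f : 'rV[R]_k -> 'cV[R]_p)
  (xs : 'I_l -> 'rV[R]_k) (w : 'I_l -> R) (beta : 'cV[R]_p) (E : 'cV[R]_p) :
  (forall j, 0 <= w j) ->
  0 <= (E^T *m M_Po f xs w beta *m E) 0 0.
Proof.
move=> hw; rewrite /M_Po mulmx_sumr mulmx_suml summxE.
apply: sumr_ge0 => j _.
rewrite -scalemxAr -scalemxAl mxE; apply: mulr_ge0.
  by apply: mulr_ge0; [exact: hw | exact: expR_ge0].
set g := f (xs j).
have -> : E^T *m (g *m g^T) *m E = (E^T *m g) *m (E^T *m g)^T.
  by rewrite trmx_mul trmxK !mulmxA.
rewrite mxE big_ord1 [(_^T) _ _]mxE.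
have -> : (0 : 'I_1) = ord0 by apply: val_inj.
by rewrite -expr2 sqr_ge0.
Qed.

Theorem theorem3 (R : realType) (k p s l m : nat)
  (X : set 'rV[R]_k) (f : 'rV[R]_k -> 'cV[R]_p)
  (hf1 : forall x : 'rV[R]_k, X x -> forall i : 'I_p, val i = 0%N -> f x i 0 = 1)
  (a b : R) (beta : 'cV[R]_p) (A : 'M[R]_(p, s))
  (xs : 'I_l -> 'rV[R]_k) (w : 'I_l -> R) :
  (0 < p)%N -> (0 < m)%N -> 0 < a -> 0 < b ->
  \rank A = s -> (s <= p)%N ->
  (forall j, X (xs j)) -> (forall j, 0 <= w j) -> \sum_(j < l) w j = 1 ->
  identifiable (M_PG a b m f xs w beta) A <->
  identifiable (M_Po f xs w beta) A.
Proof.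
move=> _ hm ha hb _ _ _ hw _.
set P := M_Po f xs w beta; set E := e1 R p.
set bm := b / m%:R.
have hbm : 0 < bm by rewrite divr_gt0 // ltr0n.
have hd := @d_ge0 R k p l f xs w beta E hw; rewrite -/P in hd.
have hc : (E^T *m P *m E) 0 0 + bm != 0 by rewrite gt_eqF // ltr_wpDl.
have hbm0 : bm != 0 by rewrite gt_eqF.
set K := 1%:M - ((E^T *m P *m E) 0 0 + bm)^-1 *: (E *m E^T *m P).
set L := 1%:M + bm^-1 *: (E *m E^T *m P).
have hKL : K *m L = 1%:M by exact: key.
have hM : M_PG a b m f xs w beta = (a / b) *: (P *m K).
  by rewrite /M_PG -/P -/E -/bm /K mulmxBr mulmx1 -scalemxAr !mulmxA.
rewrite /identifiable hM; split => -[H ->].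
  by exists ((a / b) *: (K *m H)); rewrite -scalemxAl -scalemxAr mulmxA.
exists ((b / a) *: (L *m H)).
rewrite -scalemxAr -scalemxAl scalerA mulmxA -(mulmxA P) hKL mulmx1.
by rewrite mulrA divfK ?gt_eqF // divff ?gt_eqF // scale1r.
Qed.
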